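(* Let $\mu$ be a finite Borel measure on $[0,1]$ such that for every $0<s<1$, $$|\widehat{\mu}(0)|^2+\sum_{u\in\mathbb{Z}\setminus\{0\}}|\widehat{\mu}(u)|^2|u|^{s-1}<\infty.$$ Let $U\ge1$ be an integer and $T(\xi)=\sum_{|u|\le U}c_ue(-\xi u)$ with $c_u\in\mathbb{C}$. Then for every $\rho\in(0,1)$, $$\Big|\int_0^1T(\xi)\,d\mu(\xi)\Big|\ll_{\rho,\mu}U^\rho\|T\|_{L^2([0,1])}.$$
   Context: $e(x)=e^{2\pi i x}$ and $\widehat{\mu}(\xi)=\int_0^1e(-\xi\alpha)\,d\mu(\alpha)$. The implied constant depends only on $\rho$ and $\mu$. *)

(* Defs.v *)
From HB Require Import structures.
From mathcomp Require Import all_boot all_order all_algebra.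
From mathcomp Require Import all_classical all_reals all_analysis.
Set Implicit Arguments. Unset Strict Implicit. Unset Printing Implicit Defensive.
Import Order.TTheory GRing.Theory Num.Theory.
Import numFieldNormedType.Exports.
Local Open Scope classical_set_scope.
Local Open Scope ring_scope.

Section Defs.
Variable R : realType.

(* e(x) = exp(2 pi i x) = cos(2 pi x) + i sin(2 pi x); complex numbers are
   represented by their real and imaginary parts. *)

(* Fourier coefficient  mu^(xi) = \int_0^1 e(-xi a) d mu(a):
   real part \int cos(2 pi xi a), imaginary part - \int sin(2 pi xi a). *)
Definition muhat_re (mu : {measure set R -> \bar R}) (xi : R) : R :=
  Rintegral mu `[0, 1] (fun a => cos (2 * pi * xi * a)).
Definition muhat_im (mu : {measure set R -> \bar R}) (xi : R) : R :=
  - Rintegral mu `[0, 1] (fun a => sin (2 * pi * xi * a)).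
Definition muhat_abs2 (mu : {measure set R -> \bar R}) (xi : R) : R :=
  muhat_re mu xi ^+ 2 + muhat_im mu xi ^+ 2.

(* T(xi) = \sum_{|u| <= U} c_u e(-xi u), with c_u = cre u + i cim u.
   The index k : 'I_(2U+1) corresponds to u = k - U. *)
Definition trig_re (U : nat) (cre cim : int -> R) (xi : R) : R :=
  \sum_(k < (2 * U).+1)
    let u := (k%:Z - U%:Z)%R in
    (cre u * cos (2 * pi * xi * u%:~R) + cim u * sin (2 * pi * xi * u%:~R)).
Definition trig_im (U : nat) (cre cim : int -> R) (xi : R) : R :=
  \sum_(k < (2 * U).+1)
    let u := (k%:Z - U%:Z)%R in
    (cim u * cos (2 * pi * xi * u%:~R) - cre u * sin (2 * pi * xi * u%:~R)).

Definition trig_int_abs (mu : {measure set R -> \bar R}) (U : nat)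
  (cre cim : int -> R) : R :=
  Num.sqrt (Rintegral mu `[0, 1] (trig_re U cre cim) ^+ 2
          + Rintegral mu `[0, 1] (trig_im U cre cim) ^+ 2).

Definition trig_L2norm (U : nat) (cre cim : int -> R) : R :=
  Num.sqrt (Rintegral (@lebesgue_measure R) `[0, 1]
     (fun x => trig_re U cre cim x ^+ 2 + trig_im U cre cim x ^+ 2)).

End Defs.

(* Main.v *)
Require Import Defs.
From HB Require Import structures.
From mathcomp Require Import all_boot all_order all_algebra.
From mathcomp Require Import all_classical all_reals all_analysis.
From mathcomp Require Import ring lra zify measurable_realfun.
Import Order.TTheory GRing.Theory Num.Theory.
Import numFieldNormedType.Exports.
Local Open Scope classical_set_scope.
Local Open Scope ring_scope.

Section Helpers.
Variable R : realType.

Lemma ftc01 (f F : R -> R) : continuous f ->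
  (forall x : R, is_derive x (1:R) F (f x)) ->
  Rintegral (@lebesgue_measure R) `[0, 1] f = F 1 - F 0.
Proof.
move=> cf dF.
have dv : forall x, derivable F x 1 by move=> x; exact: ex_derive.
have cF : continuous F.
  move=> x; apply: differentiable_continuous; rewrite -derivable1_diffP; exact: dv.
rewrite /Rintegral (@continuous_FTC2 _ f F)//=.
- apply: continuous_subspaceT => x; exact: cf.
- split.
  + by move=> x _; exact: dv.
  + exact/cvg_at_right_filter/cF.
  + exact/cvg_at_left_filter/cF.
- by move=> x _; rewrite derive1E derive_val.
Qed.

Lemma is_derive_lin (c x : R) : is_derive x (1:R) (fun y => c * y) c.
Proof.
have := @is_deriveZ R R R id c x 1 1 (is_derive_id _ _).
by rewrite [_%:A]mulr1.
Qed.

Lemma dsinc (c x : R) : c != 0 ->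
  is_derive x (1:R) (fun y => c^-1 * sin (c * y)) (cos (c * x)).
Proof.
move=> c0.
have h2 := @is_derive1_comp R sin (fun y => c * y) x _ _ (is_derive_sin _) (is_derive_lin c x).
have h3 := @is_deriveZ R R R _ (c^-1) x 1 _ h2.
have e : c^-1 *: (cos (c * x) * c) = cos (c * x) by rewrite /GRing.scale/= mulrC mulfK.
by rewrite e in h3.
Qed.

Lemma dcosc (c x : R) : c != 0 ->
  is_derive x (1:R) (fun y => (- c^-1) * cos (c * y)) (sin (c * x)).
Proof.
move=> c0.
have h2 := @is_derive1_comp R cos (fun y => c * y) x _ _ (is_derive_cos _) (is_derive_lin c x).
have h3 := @is_deriveZ R R R _ (- c^-1) x 1 _ h2.
have e : (- c^-1) *: (- sin (c * x) * c) = sin (c * x).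
  rewrite /GRing.scale/=; field; exact: c0.
by rewrite e in h3.
Qed.

Lemma sin2pin (m : int) : sin (2 * pi * m%:~R) = 0 :> R.
Proof.
have hn : forall n : nat, sin (2 * pi * n%:R) = 0 :> R.
  move=> n; have := periodicn (@sinD2pi R) n 0.
  have -> : (2 * pi * n%:R : R) = 0 + pi *+ 2 *+ n.
    by rewrite add0r -[pi *+ 2 *+ n]mulr_natr -[pi *+ 2]mulr_natr; ring.
  by rewrite sin0.
case: m => n; first by rewrite -pmulrn hn.
by rewrite NegzE intrN mulrN sinN -pmulrn hn oppr0.
Qed.

Lemma cos2pin (m : int) : cos (2 * pi * m%:~R) = 1 :> R.
Proof.
have hn : forall n : nat, cos (2 * pi * n%:R) = 1 :> R.
  move=> n; have := periodicn (@cosD2pi R) n 0.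
  have -> : (2 * pi * n%:R : R) = 0 + pi *+ 2 *+ n.
    by rewrite add0r -[pi *+ 2 *+ n]mulr_natr -[pi *+ 2]mulr_natr; ring.
  by rewrite cos0.
case: m => n; first by rewrite -pmulrn hn.
by rewrite NegzE intrN mulrN cosN -pmulrn hn.
Qed.

Lemma leb01 : (@lebesgue_measure R) `[0%R, 1%R] = 1%E.
Proof. by rewrite lebesgue_measure_itv/= lte_fin ltr01 oppr0 adde0. Qed.


Lemma cont_of_derive (F g : R -> R) : (forall x : R, is_derive x (1:R) F (g x)) -> continuous F.
Proof.
move=> dF x; apply: differentiable_continuous; rewrite -derivable1_diffP.
exact: ex_derive.
Qed.

Lemma dcos_lin (c x : R) : is_derive x (1:R) (fun y => cos (c * y)) (- sin (c * x) * c).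
Proof. exact: (@is_derive1_comp R cos (fun y => c * y) x _ _ (is_derive_cos _) (is_derive_lin c x)). Qed.

Lemma dsin_lin (c x : R) : is_derive x (1:R) (fun y => sin (c * y)) (cos (c * x) * c).
Proof. exact: (@is_derive1_comp R sin (fun y => c * y) x _ _ (is_derive_sin _) (is_derive_lin c x)). Qed.

Lemma cont_cos_lin (c : R) : continuous (fun y => cos (c * y)).
Proof. exact: cont_of_derive (dcos_lin c). Qed.

Lemma cont_sin_lin (c : R) : continuous (fun y => sin (c * y)).
Proof. exact: cont_of_derive (dsin_lin c). Qed.

Lemma int_bdd (nu : {measure set R -> \bar R}) (D : set R) (f : R -> R) (M : R) :
  measurable D -> (nu D < +oo)%E -> continuous f -> (forall x, `|f x| <= M) ->
  nu.-integrable D (EFin \o f).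
Proof.
move=> mD nuD cf fM; apply/integrableP; split.
  apply/measurable_EFinP; apply: measurable_funS (continuous_measurable_fun cf) => //.
apply: le_lt_trans.
  apply: (integral_le_bound (`|M| + 1)%:E) => //.
    by apply/measurable_EFinP; apply: measurable_funS (continuous_measurable_fun cf).
  apply: aeW => z Dz /=; rewrite lee_fin (le_trans (fM z))// (le_trans (ler_norm M))//.
  by rewrite lerDl.
by rewrite lte_mul_pinfty.
Qed.

Lemma int_sumR d (T : measurableType d) (nu : {measure set T -> \bar R}) (D : set T) (I : Type) (s : seq I)
  (P : pred I) (f : I -> T -> R) : measurable D ->
  (forall i, nu.-integrable D (EFin \o f i)) ->
  nu.-integrable D (EFin \o (fun x => \sum_(i <- s | P i) f i x)).
Proof.
move=> mD fi.
have -> : EFin \o (fun x => \sum_(i <- s | P i) f i x) = fun x => (\sum_(i <- s | P i) (f i x)%:E)%E.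
  by apply/funext => x /=; rewrite sumEFin.
by apply: integrable_sum => // i _; exact: fi.
Qed.

Lemma Rintegral_sum d (T : measurableType d) (nu : {measure set T -> \bar R}) (D : set T) (I : Type) (s : seq I)
  (P : pred I) (f : I -> T -> R) : measurable D ->
  (forall i, nu.-integrable D (EFin \o f i)) ->
  Rintegral nu D (fun x => \sum_(i <- s | P i) f i x) = \sum_(i <- s | P i) Rintegral nu D (f i).
Proof.
move=> mD fi; elim: s => [|i s IH].
  rewrite big_nil; under eq_Rintegral do rewrite big_nil.
  by rewrite Rintegral_cst// mul0r.
rewrite big_cons; under eq_Rintegral do rewrite big_cons.
case: (P i).
  rewrite RintegralD//; first by rewrite IH.
  exact: int_sumR.
exact: IH.
Qed.

Lemma int_cos (m : int) :
  Rintegral (@lebesgue_measure R) `[0, 1] (fun x => cos (2 * pi * m%:~R * x)) = (m == 0)%:R.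
Proof.
have [->|m0] := eqVneq m 0.
  under eq_Rintegral do rewrite mulr0 mul0r cos0.
  rewrite Rintegral_cst// (_ : fine _ = 1) ?mul1r//.
  exact: (congr1 fine leb01).
have c0 : 2 * pi * m%:~R != 0 :> R.
  by rewrite !mulf_neq0 ?intr_eq0 ?pnatr_eq0 ?(gt_eqF (pi_gt0 _)).
rewrite (@ftc01 _ _ (cont_cos_lin _) (fun x => @dsinc _ x c0)) mulr1 mulr0 sin0 mulr0.
by rewrite sin2pin mulr0 subr0.
Qed.

Lemma int_sin (m : int) :
  Rintegral (@lebesgue_measure R) `[0, 1] (fun x => sin (2 * pi * m%:~R * x)) = 0.
Proof.
have [->|m0] := eqVneq m 0.
  under eq_Rintegral do rewrite mulr0 mul0r sin0.
  by rewrite Rintegral_cst// mul0r.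
have c0 : 2 * pi * m%:~R != 0 :> R.
  by rewrite !mulf_neq0 ?intr_eq0 ?pnatr_eq0 ?(gt_eqF (pi_gt0 _)).
rewrite (@ftc01 _ _ (cont_sin_lin _) (fun x => @dcosc _ x c0)) mulr1 mulr0 cos0 mulr1.
by rewrite cos2pin mulr1 subrr.
Qed.


Lemma cont_comb (A B c c' : R) :
  continuous (fun y => A * cos (c * y) + B * sin (c' * y)).
Proof.
move=> x.
apply: (@continuousD _ _ _ (fun y => A * cos (c * y)) (fun y => B * sin (c' * y))).
  apply: (@continuousM _ _ (cst A) (fun y => cos (c * y))).
    exact: cst_continuous.
  exact: cont_cos_lin.
apply: (@continuousM _ _ (cst B) (fun y => sin (c' * y))).
  exact: cst_continuous.
exact: cont_sin_lin.
Qed.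

Lemma bd_comb (A B c c' : R) x :
  `|A * cos (c * x) + B * sin (c' * x)| <= `|A| + `|B|.
Proof.
apply: (le_trans (ler_normD _ _)); apply: lerD; rewrite normrM.
  by apply: ler_piMr => //; exact: cos_max.
by apply: ler_piMr => //; exact: sin_max.
Qed.

Lemma bd_comb0 (A c : R) x : `|A * cos (c * x)| <= `|A|.
Proof. by rewrite normrM; apply: ler_piMr => //; exact: cos_max. Qed.

Lemma bd_comb1 (A c : R) x : `|A * sin (c * x)| <= `|A|.
Proof. by rewrite normrM; apply: ler_piMr => //; exact: sin_max. Qed.

Lemma int_comb (nu : {measure set R -> \bar R}) (A B c c' : R) :
  (nu `[0%R, 1%R]%classic < +oo)%E ->
  nu.-integrable `[0, 1] (EFin \o (fun y => A * cos (c * y) + B * sin (c' * y))).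
Proof.
move=> h; apply: (@int_bdd nu _ _ (`|A| + `|B|) _ h (@cont_comb A B c c')) => // x.
exact: bd_comb.
Qed.


Lemma int_comb_leb (A B c c' : R) :
  (@lebesgue_measure R).-integrable `[0%R, 1%R]
     (EFin \o (fun y => A * cos (c * y) + B * sin (c' * y))).
Proof.
apply: continuous_compact_integrable; first exact: segment_compact.
apply: continuous_subspaceT => x; exact: cont_comb.
Qed.

Definition uz (U : nat) (k : nat) : int := (k%:Z - U%:Z)%R.

Lemma trig_sq_expand (U : nat) (cre cim : int -> R) (x : R) :
  trig_re U cre cim x ^+ 2 + trig_im U cre cim x ^+ 2 =
  \sum_(k < (2 * U).+1) \sum_(l < (2 * U).+1)
   ((cre (uz U k) * cre (uz U l) + cim (uz U k) * cim (uz U l)) *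
       cos (2 * pi * (uz U k - uz U l)%:~R * x)
    + (cre (uz U k) * cim (uz U l) - cim (uz U k) * cre (uz U l)) *
       sin (2 * pi * (uz U l - uz U k)%:~R * x)).
Proof.
rewrite /trig_re /trig_im !expr2 !big_distrlr /= -big_split /=.
apply: eq_bigr => k _; rewrite -big_split /=; apply: eq_bigr => l _.
rewrite /uz.
set a := (k%:Z - U%:Z)%R; set b := (l%:Z - U%:Z)%R.
have -> : 2 * pi * (a - b)%:~R * x = 2 * pi * x * a%:~R - 2 * pi * x * b%:~R.
  by rewrite intrB; ring.
have -> : 2 * pi * (b - a)%:~R * x = 2 * pi * x * b%:~R - 2 * pi * x * a%:~R.
  by rewrite intrB; ring.
rewrite cosB sinB; ring.
Qed.


Lemma int_cont_leb (f : R -> R) : continuous f ->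
  (@lebesgue_measure R).-integrable `[0%R, 1%R] (EFin \o f).
Proof.
move=> cf; apply: continuous_compact_integrable; first exact: segment_compact.
apply: continuous_subspaceT => x; exact: cf.
Qed.

Lemma cont_Mcos (A c : R) : continuous (fun y => A * cos (c * y)).
Proof.
move=> x; apply: (@continuousM _ _ (cst A) (fun y => cos (c * y))).
  exact: cst_continuous.
exact: cont_cos_lin.
Qed.

Lemma cont_Msin (A c : R) : continuous (fun y => A * sin (c * y)).
Proof.
move=> x; apply: (@continuousM _ _ (cst A) (fun y => sin (c * y))).
  exact: cst_continuous.
exact: cont_sin_lin.
Qed.

Lemma int_term (A B : R) (m m' : int) :
  Rintegral (@lebesgue_measure R) `[0, 1]
    (fun x => A * cos (2 * pi * m%:~R * x) + B * sin (2 * pi * m'%:~R * x))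
  = A * (m == 0)%:R.
Proof.
rewrite RintegralD//.
- rewrite RintegralZl//; last exact/int_cont_leb/cont_cos_lin.
  rewrite RintegralZl//; last exact/int_cont_leb/cont_sin_lin.
  by rewrite int_cos int_sin mulr0 addr0.
- exact/int_cont_leb/cont_Mcos.
- exact/int_cont_leb/cont_Msin.
Qed.

Lemma L2_eq (U : nat) (cre cim : int -> R) :
  Rintegral (@lebesgue_measure R) `[0, 1]
     (fun x => trig_re U cre cim x ^+ 2 + trig_im U cre cim x ^+ 2)
  = \sum_(k < (2 * U).+1) (cre (uz U k) ^+ 2 + cim (uz U k) ^+ 2).
Proof.
under eq_Rintegral do rewrite trig_sq_expand.
have mI : measurable (`[0%R, 1%R]%classic : set R) by [].
rewrite Rintegral_sum//; last first.
  move=> k; apply: int_sumR => // l; exact: int_comb_leb.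
apply: eq_bigr => k _.
rewrite Rintegral_sum//; last first.
  move=> l; exact: int_comb_leb.
under eq_bigr do rewrite int_term.
rewrite (bigD1 k)//= big1 ?addr0.
  by rewrite subrr eqxx mulr1 !expr2.
move=> l lk; rewrite subr_eq0 /uz.
suff -> : (k%:Z - U%:Z == l%:Z - U%:Z) = false by rewrite mulr0.
apply/negbTE; apply: contra lk => /eqP h; apply/eqP/val_inj => /=.
by move/addIr: h => [].
Qed.


Definition Sn (nu : {measure set R -> \bar R}) (xi : R) : R :=
  Rintegral nu `[0, 1] (fun a => sin (2 * pi * xi * a)).

Lemma int_cos_nu (nu : {measure set R -> \bar R}) (c : R) :
  (nu `[0%R, 1%R]%classic < +oo)%E ->
  nu.-integrable `[0%R, 1%R] (EFin \o (fun y => cos (c * y))).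
Proof.
move=> h; apply: (@int_bdd nu _ _ 1 _ h (@cont_cos_lin c)) => // x.
exact: cos_max.
Qed.

Lemma int_sin_nu (nu : {measure set R -> \bar R}) (c : R) :
  (nu `[0%R, 1%R]%classic < +oo)%E ->
  nu.-integrable `[0%R, 1%R] (EFin \o (fun y => sin (c * y))).
Proof.
move=> h; apply: (@int_bdd nu _ _ 1 _ h (@cont_sin_lin c)) => // x.
exact: sin_max.
Qed.

Lemma mu_re (nu : {measure set R -> \bar R}) (U : nat) (cre cim : int -> R) :
  (nu `[0%R, 1%R]%classic < +oo)%E ->
  Rintegral nu `[0, 1] (trig_re U cre cim) =
  \sum_(k < (2 * U).+1) (cre (uz U k) * muhat_re nu (uz U k)%:~R
                        + cim (uz U k) * Sn nu (uz U k)%:~R).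
Proof.
move=> h.
have -> : trig_re U cre cim = fun xi => \sum_(k < (2 * U).+1)
   (cre (uz U k) * cos (2 * pi * (uz U k)%:~R * xi)
    + cim (uz U k) * sin (2 * pi * (uz U k)%:~R * xi)).
  by apply/funext => xi; rewrite /trig_re; apply: eq_bigr => k _ /=; rewrite ![2 * pi * xi * _]mulrAC.
rewrite Rintegral_sum//; last by move=> k; exact: int_comb.
apply: eq_bigr => k _.
rewrite RintegralD//; last 2 first.
- by apply: (@int_bdd nu _ _ _ _ h (cont_Mcos _ _) (bd_comb0 _ _)).
- by apply: (@int_bdd nu _ _ _ _ h (cont_Msin _ _) (bd_comb1 _ _)).
rewrite RintegralZl//; last exact: int_cos_nu.
by rewrite RintegralZl//; last exact: int_sin_nu.
Qed.


Lemma mu_im (nu : {measure set R -> \bar R}) (U : nat) (cre cim : int -> R) :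
  (nu `[0%R, 1%R]%classic < +oo)%E ->
  Rintegral nu `[0, 1] (trig_im U cre cim) =
  \sum_(k < (2 * U).+1) (cim (uz U k) * muhat_re nu (uz U k)%:~R
                        + (- cre (uz U k)) * Sn nu (uz U k)%:~R).
Proof.
move=> h.
have -> : trig_im U cre cim = fun xi => \sum_(k < (2 * U).+1)
   (cim (uz U k) * cos (2 * pi * (uz U k)%:~R * xi)
    + (- cre (uz U k)) * sin (2 * pi * (uz U k)%:~R * xi)).
  apply/funext => xi; rewrite /trig_im; apply: eq_bigr => k _ /=.
  by rewrite ![2 * pi * xi * _]mulrAC mulNr.
rewrite Rintegral_sum//; last by move=> k; exact: int_comb.
apply: eq_bigr => k _.
rewrite RintegralD//; last 2 first.
- by apply: (@int_bdd nu _ _ _ _ h (cont_Mcos _ _) (bd_comb0 _ _)).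
- by apply: (@int_bdd nu _ _ _ _ h (cont_Msin _ _) (bd_comb1 _ _)).
rewrite RintegralZl//; last exact: int_cos_nu.
by rewrite RintegralZl//; last exact: int_sin_nu.
Qed.

Lemma CS (n : nat) (p q r t : 'I_n -> R) :
  (\sum_(k < n) (p k * q k + r k * t k)) ^+ 2 <=
  (\sum_(k < n) (p k ^+ 2 + r k ^+ 2)) * (\sum_(k < n) (q k ^+ 2 + t k ^+ 2)).
Proof.
set X := \sum_(k < n) _; set A := \sum_(k < n) _; set B := \sum_(k < n) _.
have B0 : 0 <= B by apply: sumr_ge0 => k _; rewrite addr_ge0 // sqr_ge0.
have A0 : 0 <= A by apply: sumr_ge0 => k _; rewrite addr_ge0 // sqr_ge0.
have key : forall z : R, 0 <= A - 2 * z * X + z ^+ 2 * B.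
  move=> z.
  have -> : A - 2 * z * X + z ^+ 2 * B =
     \sum_(k < n) ((p k - z * q k) ^+ 2 + (r k - z * t k) ^+ 2).
    rewrite /A /X /B mulr_sumr mulr_sumr -sumrN -!big_split /=.
    by apply: eq_bigr => k _; ring.
  by apply: sumr_ge0 => k _; rewrite addr_ge0 // sqr_ge0.
have [B0'|Bpos] := eqVneq B 0.
  have hX : X = 0.
    apply/eqP; apply: contraT => Xn0.
    have := key ((A + 1) / (2 * X)); rewrite B0' mulr0 addr0.
    have -> : 2 * ((A + 1) / (2 * X)) * X = A + 1 by field; rewrite Xn0.
    lra.
  by rewrite hX expr0n /= mulr_ge0.
have Bp : 0 < B by rewrite lt_neqAle eq_sym Bpos B0.
have := key (X / B).
have -> : A - 2 * (X / B) * X + (X / B) ^+ 2 * B = A - X ^+ 2 / B.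
  by field; rewrite Bpos.
by rewrite subr_ge0 ler_pdivrMr // mulrC.
Qed.


Lemma reindex (h : R -> R) (U : nat) :
  \sum_(k < (2 * U).+1) h (uz U k)%:~R =
  h 0 + \sum_(1 <= n < U.+1) (h n%:R + h (- n%:R)).
Proof.
rewrite -(big_mkord xpredT (fun k => h (uz U k)%:~R)).
rewrite (@big_cat_nat _ _ _ U 0 (2 * U).+1) //=; last by lia.
rewrite (big_addn 0 _ U).
have -> : ((2 * U).+1 - U = U.+1)%N by lia.
rewrite big_nat_recl // big_nat_rev /= big_add1 big_split /=.
have e1 : \sum_(0 <= i < U) h (uz U (i.+1 + U))%:~R = \sum_(0 <= i < U) h i.+1%:R.
  apply: eq_big_nat => i _; congr h.
  by rewrite /uz PoszD addrK -pmulrn.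
have e2 : \sum_(0 <= i < U) h (uz U (0 + U - i.+1)%N)%:~R =
          \sum_(0 <= i < U) h (- i.+1%:R).
  apply: eq_big_nat => i /andP[_ iU]; congr h.
  rewrite /uz add0n -subzn //.
  by rewrite addrAC subrr add0r intrN -pmulrn.
have e0 : uz U (0 + U)%N = 0 by rewrite /uz add0n subrr.
rewrite e0 e1 e2; ring.
Qed.

End Helpers.

Lemma abs2_ge0 (R : realType) (nu : {measure set R -> \bar R}) x : 0 <= muhat_abs2 nu x.
Proof. by rewrite /muhat_abs2 addr_ge0 // sqr_ge0. Qed.

Theorem lemma4p1 (R : realType) (mu : {finite_measure set R -> \bar R})
  (hsupp : mu (~` `[0%R, 1%R]) = 0%E)
  (hfourier : forall s : R, 0 < s < 1 ->
     ((muhat_abs2 mu 0)%:E +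
      \sum_(1 <= n <oo)
        ((muhat_abs2 mu n%:R + muhat_abs2 mu (- n%:R)) * (n%:R `^ (s - 1)))%:E
      < +oo)%E)
  (rho : R) (hrho : 0 < rho < 1) :
  exists C : R, forall (U : nat) (cre cim : int -> R), (1 <= U)%N ->
    trig_int_abs mu U cre cim <= C * (U%:R `^ rho) * trig_L2norm U cre cim.
Proof.
have [rho0 rho1] : 0 < rho /\ rho < 1 by case/andP: hrho.
have hs : 0 < 1 - rho < 1 by apply/andP; split; lra.
have hF := hfourier _ hs.
set g := fun n : nat => (muhat_abs2 mu n%:R + muhat_abs2 mu (- n%:R)) * (n%:R `^ (1 - rho - 1)).
have g0 : forall n, 0 <= g n.
  by move=> n; rewrite /g mulr_ge0 ?powR_ge0 // addr_ge0 // abs2_ge0.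
set S := (\sum_(1 <= n <oo) (g n)%:E)%E.
have S0 : (0 <= S)%E by apply: nneseries_ge0 => n _ _; rewrite lee_fin.
have Sfin : S \is a fin_num.
  rewrite ge0_fin_numE //; apply: le_lt_trans hF.
  by rewrite leeDr // lee_fin abs2_ge0.
set K' := fine S.
have partial : forall U, \sum_(1 <= n < U.+1) g n <= K'.
  move=> U; rewrite -lee_fin /K' fineK // -sumEFin.
  by apply: nneseries_lim_ge => n _ _; rewrite lee_fin.
set K := muhat_abs2 mu 0 + K'.
have K'0 : 0 <= K' by rewrite /K' fine_ge0.
have K0 : 0 <= K by rewrite /K addr_ge0 // abs2_ge0.
have mfin : (mu `[0%R, 1%R]%classic < +oo)%E.
  by rewrite -ge0_fin_numE // fin_num_measure.
exists (Num.sqrt (2 * K)) => U cre cim U1.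
set A := \sum_(k < (2 * U).+1) (cre (uz U k) ^+ 2 + cim (uz U k) ^+ 2).
set B := \sum_(k < (2 * U).+1) (muhat_re mu (uz U k)%:~R ^+ 2 + @Sn R mu (uz U k)%:~R ^+ 2).
set X := Rintegral mu `[0, 1] (trig_re U cre cim).
set Y := Rintegral mu `[0, 1] (trig_im U cre cim).
have A0 : 0 <= A by apply: sumr_ge0 => k _; rewrite addr_ge0 // sqr_ge0.
have hA : trig_L2norm U cre cim = Num.sqrt A by rewrite /trig_L2norm L2_eq.
have hX : X ^+ 2 <= A * B by rewrite /X mu_re //; apply: CS.
have hY : Y ^+ 2 <= A * B.
  rewrite /Y mu_im //; apply: le_trans; first exact: CS.
  apply: ler_wpM2r; first by apply: sumr_ge0 => k _; rewrite addr_ge0 // sqr_ge0.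
  by rewrite le_eqVlt; apply/orP; left; apply/eqP/eq_bigr => k _; rewrite sqrrN addrC.
have hB1 : B = muhat_abs2 mu 0 + \sum_(1 <= n < U.+1) (muhat_abs2 mu n%:R + muhat_abs2 mu (- n%:R)).
  rewrite -reindex; apply: eq_bigr => k _.
  by rewrite /muhat_abs2 /muhat_im sqrrN.
set P := U%:R `^ rho.
have P1 : 1 <= P.
  have -> : (1 : R) = 1 `^ rho by rewrite powR1.
  rewrite /P; apply: ge0_ler_powR => //; first exact: ltW.
  - by rewrite nnegrE.
  - by rewrite nnegrE.
  - by rewrite ler1n.
have hsum : \sum_(1 <= n < U.+1) (muhat_abs2 mu n%:R + muhat_abs2 mu (- n%:R))
            <= P * \sum_(1 <= n < U.+1) g n.
  rewrite mulr_sumr big_nat [leRHS]big_nat; apply: ler_sum => n /andP[n1 nU].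
  set t := _ + _.
  have t0 : 0 <= t by rewrite addr_ge0 // abs2_ge0.
  rewrite /g -/t (_ : 1 - rho - 1 = - rho); last by ring.
  rewrite powRN.
  have np : 0 < n%:R `^ rho :> R by apply: powR_gt0; rewrite ltr0n.
  have nP : n%:R `^ rho <= P.
    rewrite /P; apply: ge0_ler_powR => //; first exact: ltW.
    - by rewrite nnegrE.
    - by rewrite nnegrE.
    - by rewrite ler_nat -ltnS.
  rewrite mulrCA ler_peMr //.
  by rewrite ler_pdivlMr // mul1r.
have hB : B <= P * K.
  rewrite hB1 /K mulrDr; apply: lerD.
    by rewrite ler_peMl // abs2_ge0.
  by apply: le_trans hsum _; rewrite ler_wpM2l // (le_trans ler01 P1).
have P0 : 0 <= P by apply: le_trans P1.
have hXY : X ^+ 2 + Y ^+ 2 <= (Num.sqrt (2 * K) * P * Num.sqrt A) ^+ 2.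
  rewrite !exprMn !sqr_sqrtr //; last by rewrite mulr_ge0.
  have h1 : A * B <= A * (P * K) by rewrite ler_wpM2l.
  have h2 : P * K <= P ^+ 2 * K.
    by rewrite expr2 -mulrA ler_peMl // mulr_ge0.
  have h3 : A * (P * K) <= A * (P ^+ 2 * K) by rewrite ler_wpM2l.
  have -> : 2 * K * P ^+ 2 * A = 2 * (A * (P ^+ 2 * K)) by ring.
  lra.
rewrite hA /trig_int_abs -/X -/Y.
apply: le_trans (ler_wsqrtr hXY) _.
by rewrite sqrtr_sqr ger0_norm // !mulr_ge0 // sqrtr_ge0.
Qed.
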